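(* Let $(P)$ be a property of C*-algebras. Assume: (1) the zero C*-algebra has $(P)$; (2) whenever $A$ is a separable C*-algebra and $I, J \subseteq A$ are ideals with $(P)$, then $I + J$ has $(P)$; (3) whenever $A$ is a separable C*-algebra and $I_0 \subseteq I_1 \subseteq \cdots \subseteq A$ is a sequence of ideals with $(P)$, then $\overline{\bigcup_{n=0}^\infty I_n}$ has $(P)$. Then $(P)$ separably admits largest ideals.
   Context: All ideals are closed two-sided. $(P)$ separably admits largest ideals if for every separable C*-algebra $A$ there is an ideal $I \subseteq A$ with $(P)$ such that every ideal $J \subseteq A$ with $(P)$ satisfies $J \subseteq I$. *)

(* Defs.v *)
From mathcomp Require Import all_boot all_order all_algebra.
From mathcomp Require Import all_classical all_reals all_analysis.
From mathcomp Require Import complex.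
Import numFieldNormedType.Exports.
Import Order.TTheory GRing.Theory Num.Theory.
Set Implicit Arguments. Unset Strict Implicit. Unset Printing Implicit Defensive.
Local Open Scope ring_scope.
Local Open Scope classical_set_scope.

(** A (not necessarily unital) complex C*-algebra: a complex Banach space with
    a bilinear associative multiplication, a conjugate-linear involutive
    anti-multiplicative involution, a submultiplicative norm and the
    C*-identity ||x^* x|| = ||x||^2. (Norms take values in R[i]; they are real.) *)
Record CstarAlg (R : realType) := {
  cs_car :> completeNormedModType R[i];
  cs_mul : cs_car -> cs_car -> cs_car;
  cs_star : cs_car -> cs_car;
  cs_mulDl : forall (a : R[i]) (x y z : cs_car),
      cs_mul (a *: x + y) z = a *: cs_mul x z + cs_mul y z;
  cs_mulDr : forall (a : R[i]) (x y z : cs_car),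
      cs_mul z (a *: x + y) = a *: cs_mul z x + cs_mul z y;
  cs_mulA : forall x y z : cs_car, cs_mul x (cs_mul y z) = cs_mul (cs_mul x y) z;
  cs_starD : forall (a : R[i]) (x y : cs_car),
      cs_star (a *: x + y) = a^* *: cs_star x + cs_star y;
  cs_starK : forall x : cs_car, cs_star (cs_star x) = x;
  cs_starM : forall x y : cs_car,
      cs_star (cs_mul x y) = cs_mul (cs_star y) (cs_star x);
  cs_normM : forall x y : cs_car, `|cs_mul x y| <= `|x| * `|y|;
  cs_cstar : forall x : cs_car, `|cs_mul (cs_star x) x| = `|x| ^+ 2
}.

Arguments cs_mul {R} c _ _.
Arguments cs_star {R} c _.

Definition separable (R : realType) (A : CstarAlg R) : Prop :=
  exists D : set A, countable D /\ closure D = setT.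

Definition ideal (R : realType) (A : CstarAlg R) (I : set A) : Prop :=
  [/\ I 0,
      (forall (a : R[i]) x y, I x -> I y -> I (a *: x + y)),
      (forall x y, I y -> I (cs_mul A x y) /\ I (cs_mul A y x))
    & closed I].

Definition ideal_sum (R : realType) (A : CstarAlg R) (I J : set A) : set A :=
  [set z | exists x y, I x /\ J y /\ z = x + y].

Definition is_zero_alg (R : realType) (B : CstarAlg R) : Prop :=
  forall x : B, x = 0.

Definition star_iso_onto (R : realType) (B A : CstarAlg R) (f : B -> A)
    (I : set A) : Prop :=
  [/\ (forall (a : R[i]) x y, f (a *: x + y) = a *: f x + f y),
      (forall x y, f (cs_mul B x y) = cs_mul A (f x) (f y)),
      (forall x, f (cs_star B x) = cs_star A (f x)),
      (forall x, `|f x| = `|x|)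
    & range f = I].

(** The ideal I of A, regarded as a C*-algebra, has the property P:
    I is *-isomorphic to some C*-algebra B with property P. *)
Definition ideal_hasP (R : realType) (P : CstarAlg R -> Prop) (A : CstarAlg R)
    (I : set A) : Prop :=
  exists (B : CstarAlg R) (f : B -> A), P B /\ star_iso_onto f I.

Definition separably_admits_largest_ideals (R : realType)
    (P : CstarAlg R -> Prop) : Prop :=
  forall A : CstarAlg R, separable A ->
    exists I : set A, [/\ ideal I, ideal_hasP P I &
      forall J : set A, ideal J -> ideal_hasP P J -> J `<=` I].

(* Main.v *)
Set Warnings "-all".
From HB Require Import structures.
Require Import Defs.
From mathcomp Require Import all_boot all_order all_algebra.
From mathcomp Require Import all_classical all_reals all_analysis.
From mathcomp Require Import complex.
Import numFieldNormedType.Exports.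
Import Order.TTheory GRing.Theory Num.Theory.
Local Open Scope ring_scope.
Local Open Scope classical_set_scope.


Section Helpers.
Variable R : realType.

Lemma archiC (e : R[i]) : 0 < e -> exists k : nat, (k.+1%:R : R[i])^-1 < e.
Proof.
destruct e as [a b]; rewrite ltcE /= => /andP[/eqP -> a0].
have a10 : 0 <= a^-1 by rewrite invr_ge0 ltW.
have := archi_boundP a10; set k := Num.Def.archi_bound _ => hk.
exists k.
have -> : (k.+1%:R : R[i])^-1 = ((k.+1%:R : R)^-1)%:C%C.
  by rewrite -(rmorph_nat (real_complex R)) -fmorphV.
rewrite complexr0 ltcR.
rewrite -(invrK a) ltf_pV2 ?posrE ?invr_gt0 //.
by apply: (lt_trans hk); rewrite ltr_nat.
Qed.

Lemma archiC2 (e : R[i]) : 0 < e -> exists k : nat, (k.+1%:R : R[i])^-1 < e / 2.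
Proof. by move=> e0; apply: archiC; rewrite divr_gt0. Qed.

Lemma rk_gt0 (k : nat) : 0 < (k.+1%:R : R[i])^-1.
Proof. by rewrite invr_gt0 ltr0Sn. Qed.

Lemma normlt_eq0 (V : normedModType R[i]) (x : V) :
  (forall e : R[i], 0 < e -> `|x| < e) -> x = 0.
Proof.
move=> h; apply/eqP; apply/negPn/negP => nx.
have := h `|x|; rewrite normr_gt0 nx ltxx; by move/(_ isT).
Qed.

Lemma ballN (V : normedModType R[i]) (x y : V) e : ball x e y <-> `|x - y| < e.
Proof. by rewrite -ball_normE. Qed.

Lemma closure_ex (V : normedModType R[i]) (U : set V) z :
  closure U z -> forall r : R[i], 0 < r -> exists y, U y /\ `|z - y| < r.
Proof.
move=> cz r r0; have [y [Uy By]] := cz _ (nbhsx_ballx z r r0).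
by exists y; split => //; apply/ballN.
Qed.

Lemma closure_in (V : normedModType R[i]) (U : set V) z :
  (forall r : R[i], 0 < r -> exists y, U y /\ `|z - y| < r) -> closure U z.
Proof.
move=> h B /nbhs_ballP [r r0 sub].
have [y [Uy zy]] := h r r0; exists y; split => //; apply: sub; exact/ballN.
Qed.

Definition Z0 := 'M[R[i]]_(0,0).
HB.instance Definition _ := NormedModule.on Z0.
Lemma Z0_all (x : Z0) : x = 0. Proof. exact: flatmx0. Qed.
Lemma Z0_eq (x y : Z0) : x = y. Proof. by rewrite (Z0_all x) (Z0_all y). Qed.
Lemma Z0_complete (F : set_system Z0) : ProperFilter F -> cauchy F -> cvg F.
Proof.
move=> PF _. apply/cvg_ex; exists (0 : Z0) => S /nbhs_singleton S0.
have -> : S = setT. by rewrite predeqE => x; split => // _; rewrite (Z0_all x).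
exact: filterT.
Qed.
HB.instance Definition _ := Uniform_isComplete.Build Z0 Z0_complete.

Definition Z0mul (x y : Z0) : Z0 := 0.
Definition Z0star (x : Z0) : Z0 := 0.

Lemma Z0norm (x : Z0) : `|x| = 0.
Proof. by rewrite (Z0_all x) normr0. Qed.

Definition ZeroAlg : CstarAlg R.
refine (@Build_CstarAlg R Z0 Z0mul Z0star _ _ _ _ _ _ _ _);
  try (intros; apply: Z0_eq).
- by move=> x y; rewrite !Z0norm mulr0.
- by move=> x; rewrite !Z0norm expr0n.
Defined.

Lemma ZeroAlg_zero : is_zero_alg ZeroAlg.
Proof. move=> x; exact: Z0_all. Qed.

End Helpers.
Arguments archiC {R e}.
Arguments archiC2 {R e}.
Arguments rk_gt0 {R}.
Arguments closure_ex {R V U z}.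
Arguments closure_in {R V U z}.
Arguments ballN {R V x y e}.
Arguments Z0_all {R}.
Section Alg.
Variables (R : realType) (A : CstarAlg R).

Lemma mul0l (x : A) : cs_mul A 0 x = 0.
Proof. by have := cs_mulDl (-1) 0 0 x; rewrite scaler0 addr0 scaleN1r addNr. Qed.
Lemma mul0r (x : A) : cs_mul A x 0 = 0.
Proof. by have := cs_mulDr (-1) 0 0 x; rewrite scaler0 addr0 scaleN1r addNr. Qed.
Lemma mulDr (x y z : A) : cs_mul A z (x + y) = cs_mul A z x + cs_mul A z y.
Proof. by have := cs_mulDr 1 x y z; rewrite !scale1r. Qed.
Lemma mulDl (x y z : A) : cs_mul A (x + y) z = cs_mul A x z + cs_mul A y z.
Proof. by have := cs_mulDl 1 x y z; rewrite !scale1r. Qed.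
Lemma mulBr (x y z : A) : cs_mul A z (x - y) = cs_mul A z x - cs_mul A z y.
Proof. by have := cs_mulDr (-1) y x z; rewrite !scaleN1r addrC [_ + cs_mul _ _ _]addrC. Qed.
Lemma mulBl (x y z : A) : cs_mul A (x - y) z = cs_mul A x z - cs_mul A y z.
Proof. by have := cs_mulDl (-1) y x z; rewrite !scaleN1r addrC [_ + cs_mul _ _ _]addrC. Qed.
Lemma star0 : cs_star A 0 = 0.
Proof.
have := cs_starD (-1) (0:A) (0:A); rewrite addr0 (scaler0 _ (-1)).
have -> : ((-1 : R[i])^*) = -1 by rewrite rmorphN1.
by rewrite scaleN1r addNr.
Qed.

End Alg.
Section Closed.
Variable R : realType.

Lemma range_closed (B A : CstarAlg R) (f : B -> A) :
  (forall (a : R[i]) x y, f (a *: x + y) = a *: f x + f y) ->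
  (forall x, `|f x| = `|x|) -> closed (range f).
Proof.
move=> lin iso.
have fB : forall x y, f (x - y) = f x - f y.
  by move=> x y; have := lin (-1) y x; rewrite !scaleN1r addrC [- f y + _]addrC.
have dist : forall x y, `|f x - f y| = `|x - y| by move=> x y; rewrite -fB iso.
move=> z cz.
pose D := fun n : nat => [set x : B | `|z - f x| < (n.+1%:R : R[i])^-1].
pose G := filter_from setT D.
have rkle : forall m n, (m <= n)%N -> (n.+1%:R:R[i])^-1 <= (m.+1%:R)^-1.
  by move=> m n mn; rewrite lef_pV2 ?posrE ?ltr0Sn // ler_nat.
have FG : Filter G.
  apply: filter_from_filter; first by exists 0%N.
  move=> i j _ _; exists (maxn i j) => // x Dx; split;
  by rewrite /D/= (lt_le_trans Dx) // rkle // ?leq_maxl ?leq_maxr.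
have PG : ProperFilter G.
  apply: filter_from_proper => i _.
  have [y [[x _ <-] zy]] := closure_ex cz _ (rk_gt0 i).
  by exists x.
have cG : cauchy G.
  apply/cauchy_ballP => e e0.
  have [k hk] := archiC2 e0.
  exists (D k, D k); first by split; exists k.
  case=> x y /= [Dx Dy]; apply/ballN; rewrite -dist.
  by apply: (distm_lt_splitr (z:=z)); apply: lt_trans hk.
have := @cauchy_cvg _ G PG cG; move/cvg_ex => [x0 Gx0].
exists x0 => //.
apply/eqP; rewrite -subr_eq0; apply/eqP; apply: normlt_eq0 => e e0.
have [k hk] := archiC2 e0.
have : G (ball x0 (k.+1%:R^-1)) := Gx0 _ (nbhsx_ballx x0 _ (rk_gt0 k)).
case=> m _ Dm.
have GDm : G (D m) by exists m.
have GDk : G (D k) by exists k.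
have [x [Dmx Dkx]] := filter_ex (filterI GDm GDk).
apply: (distm_lt_splitr (z:=f x)).
  rewrite dist distrC; apply: lt_trans hk; exact/ballN/Dm.
rewrite distrC; exact: lt_trans hk.
Qed.

End Closed.
Section Ideals.
Variable R : realType.

Lemma zero_hasP (P : CstarAlg R -> Prop) (h0 : forall B, is_zero_alg B -> P B)
  (A : CstarAlg R) : ideal_hasP P [set (0:A)].
Proof.
exists (ZeroAlg R), (fun _ => 0); split; first exact/h0/ZeroAlg_zero.
split.
- by move=> a x y; rewrite scaler0 addr0.
- by move=> x y; rewrite mul0l.
- by move=> x; rewrite star0.
- by move=> x; rewrite normr0 (Z0_all x) normr0.
- by rewrite predeqE => y; split; [case=> ? _ <- | move=> ->; exists 0].
Qed.

Lemma hasP_closed {P : CstarAlg R -> Prop} {A : CstarAlg R} {I : set A} :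
  ideal_hasP P I -> closed I.
Proof. by case=> B [f [_ [lin _ _ iso <-]]]; exact: range_closed. Qed.

Lemma hasP_lin {P : CstarAlg R -> Prop} {A : CstarAlg R} {I : set A} :
  ideal_hasP P I -> forall (a : R[i]) x y, I x -> I y -> I (a *: x + y).
Proof.
case=> B [f [_ [lin _ _ iso <-]]] a _ _ [x _ <-] [y _ <-].
by exists (a *: x + y) => //; rewrite lin.
Qed.

Lemma zero_ideal (P : CstarAlg R -> Prop) (h0 : forall B, is_zero_alg B -> P B)
  (A : CstarAlg R) : ideal [set (0:A)].
Proof.
split => //.
- by move=> a x y -> ->; rewrite scaler0 addr0.
- by move=> x y ->; rewrite mul0l mul0r.
- exact: hasP_closed (zero_hasP _ h0 A).
Qed.

Lemma sum_ideal (A : CstarAlg R) (I J : set A) :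
  ideal I -> ideal J -> closed (ideal_sum I J) -> ideal (ideal_sum I J).
Proof.
case=> I0 Il Im _ [J0 Jl Jm _] cl; split => //.
- by exists 0, 0; rewrite addr0.
- move=> a _ _ [x1 [y1 [Ix1 [Jy1 ->]]]] [x2 [y2 [Ix2 [Jy2 ->]]]].
  exists (a *: x1 + x2), (a *: y1 + y2); split; first exact: Il.
  split; first exact: Jl.
  by rewrite scalerDr addrACA.
- move=> x _ [x1 [y1 [Ix1 [Jy1 ->]]]]; split.
  + exists (cs_mul A x x1), (cs_mul A x y1); split; first exact: (Im _ _ Ix1).1.
    by split; [exact: (Jm _ _ Jy1).1 | rewrite mulDr].
  + exists (cs_mul A x1 x), (cs_mul A y1 x); split; first exact: (Im _ _ Ix1).2.
    by split; [exact: (Jm _ _ Jy1).2 | rewrite mulDl].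
Qed.

Lemma closure_lip (A : CstarAlg R) (U : set A) (g : A -> A) (c : R[i]) :
  0 <= c -> (forall u v, `|g u - g v| <= c * `|u - v|) ->
  (forall u, U u -> U (g u)) -> forall y, closure U y -> closure U (g y).
Proof.
move=> c0 lip gU y cy; apply: closure_in => r r0.
have c1 : 0 < c + 1 by rewrite ltr_wpDl.
have d0 : 0 < r / (c + 1) by rewrite divr_gt0.
have [u [Uu yu]] := closure_ex cy _ d0.
exists (g u); split; first exact: gU.
apply: (le_lt_trans (lip _ _)).
apply: (le_lt_trans (y := (c + 1) * `|y - u|)).
  by rewrite ler_wpM2r // lerDl.
have -> : r = (c + 1) * (r / (c + 1)) by rewrite mulrC divfK // gt_eqF.
by rewrite ltr_pM2l.
Qed.

End Ideals.
Arguments hasP_closed {R P A I}.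
Arguments hasP_lin {R P A I}.
Arguments closure_lip {R A U g c}.
Arguments zero_ideal {R P} h0 A.
Arguments zero_hasP {R P} h0 A.
Arguments sum_ideal {R A I J}.

Theorem lemma1p6 (R : realType) (P : CstarAlg R -> Prop)
  (h0 : forall B : CstarAlg R, is_zero_alg B -> P B)
  (hsum : forall A : CstarAlg R, separable A ->
     forall I J : set A, ideal I -> ideal J -> ideal_hasP P I -> ideal_hasP P J ->
       ideal_hasP P (ideal_sum I J))
  (hunion : forall A : CstarAlg R, separable A ->
     forall In : nat -> set A, (forall n, ideal (In n)) ->
       (forall n, In n `<=` In n.+1) -> (forall n, ideal_hasP P (In n)) ->
       ideal_hasP P (closure (\bigcup_n In n))) :
  separably_admits_largest_ideals P.
Proof.
move=> A hsep; have [D [cD clD]] := hsep.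
pose Q := fun J : set A => ideal J /\ ideal_hasP P J.
have zQ : Q [set 0] by split; [exact: zero_ideal h0 A | exact: zero_hasP].
have [g gs] : exists g : nat -> A, set_surj setT D g by apply/pcard_surjP.
have dense : forall (s : A) (r : R[i]), 0 < r -> exists i, `|s - g i| < r.
  move=> s r r0.
  have cs : closure D s by rewrite clD.
  have [d [Dd sd]] := closure_ex cs _ r0.
  by have [i _ gi] := gs _ Dd; exists i; rewrite gi.
pose rk k := (k.+1%:R : R[i])^-1.
pose cond n (s : A) := if @unpickle (prod nat nat) n is Some (i, k)
  then is_true (`|g i - s| < rk k) else False.
have hJ : forall n, exists J, Q J /\
    ((exists J' s, Q J' /\ J' s /\ cond n s) -> exists s, J s /\ cond n s).
  move=> n; case: (pselect (exists J' s, Q J' /\ J' s /\ cond n s)).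
  - by move=> [J' [s [QJ [Js c]]]]; exists J'; split => // _; exists s.
  - by move=> nex; exists [set 0]; split => // ex; case: nex.
have [Jn hJn] := choice hJ.
pose Is := fix Is n := if n is m.+1 then ideal_sum (Is m) (Jn m) else [set (0:A)].
have QIs : forall n, Q (Is n).
  elim=> [|n [iI hI]] //=.
  have [iJ hJ'] := (hJn n).1.
  have hs := hsum A hsep _ _ iI iJ hI hJ'.
  split => //; apply: sum_ideal => //; exact: hasP_closed hs.
have incr : forall n, Is n `<=` Is n.+1.
  move=> n x Ix /=; exists x, 0; split => //; split; last by rewrite addr0.
  by case: (hJn n).1 => -[].
have JIs : forall n, Jn n `<=` Is n.+1.
  move=> n y Jy /=; exists 0, y; split; last by rewrite add0r.
  by case: (QIs n) => -[].
pose I := closure (\bigcup_n Is n).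
have hI : ideal_hasP P I :=
  hunion A hsep Is (fun n => (QIs n).1) incr (fun n => (QIs n).2).
exists I; split => //.
- split.
  + by apply: subset_closure; exists 0%N.
  + exact: hasP_lin hI.
  + move=> x y Iy; split.
    * apply: (closure_lip (c := `|x|)) Iy => //.
        by move=> u v; rewrite -mulBr cs_normM.
      move=> u [n _ Inu]; exists n => //.
      by case: (QIs n) => -[_ _ Im _] _; exact: (Im _ _ Inu).1.
    * apply: (closure_lip (g := fun y => cs_mul A y x) (c := `|x|)) Iy => //.
        by move=> u v; rewrite -mulBl mulrC cs_normM.
      move=> u [n _ Inu]; exists n => //.
      by case: (QIs n) => -[_ _ Im _] _; exact: (Im _ _ Inu).2.
  + exact: closed_closure.
- move=> J iJ hJP s Js; apply: closure_in => r r0.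
  have [k hk] := archiC2 r0.
  have [i hi] := dense s (rk k) (rk_gt0 k).
  have c : cond (pickle (i, k)) s by rewrite /cond pickleK distrC.
  have [s' [Js' c']] := (hJn (pickle (i, k))).2
    (ex_intro _ J (ex_intro _ s (conj (conj iJ hJP) (conj Js c)))).
  rewrite /cond pickleK in c'.
  exists s'; split; first by exists (pickle (i, k)).+1 => //; exact: JIs.
  apply: (distm_lt_splitr (z := g i)).
    by rewrite distrC; exact: lt_trans hk.
  exact: lt_trans hk.
Qed.
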